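(* Let $(\Lambda,d)$ be a $k$-graph and let $(\overline{\Lambda},\overline d)$ be the extension described in the context. Then $(\overline{\Lambda},\overline d)$ is a $k$-graph with no sources, i.e. $v\overline{\Lambda}^{n}\neq\emptyset$ for every vertex $v$ of $\overline{\Lambda}$ and every $n\in\mathbb{N}^k$.
   Context: A $k$-graph $(\Lambda,d)$ is a countable category with a degree functor $d:\Lambda\to\mathbb{N}^k$ satisfying unique factorization (if $d(\lambda)=m+n$ there are unique $\mu,\nu$ with $\lambda=\mu\nu$, $d(\mu)=m$, $d(\nu)=n$); $\Lambda^0$ vertices, $r,s$ range/source, $v\Lambda^n=\{\lambda:r(\lambda)=v,d(\lambda)=n\}$; a vertex $v$ is a source if $v\Lambda^n=\emptyset$ for some $n$. $e_i$ standard basis, $\le$ coordinatewise, $\vee,\wedge$ coordinatewise max/min. For $m\in(\mathbb{N}\cup\{\infty\})^k$, $\Omega_{k,m}$ has objects $\{p\in\mathbb{N}^k:p\le m\}$, morphisms $(p,q)$, $p\le q\le m$, $r(p,q)=p$, $s(p,q)=q$, $d(p,q)=q-p$. A graph morphism $x:\Omega_{k,m}\to\Lambda$ is a degree-preserving functor; $d(x)=m$, $x(a,b)=x((a,b))$, $x(a)=x(a,a)$. It is a boundary path if there is $n_x\in\mathbb{N}^k$, $n_x\le d(x)$, with $x(p)\Lambda^{e_i}=\emptyset$ whenever $p\in\mathbb{N}^k$, $n_x\le p\le d(x)$, $p_i=d(x)_i$; $\Lambda^{\le\infty}$ is the set of boundary paths. $\sigma^px(a,b)=x(a+p,b+p)$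 ($p\le d(x)$); $\lambda x$ is the concatenation of $\lambda$ (with $s(\lambda)=x(0)$) and $x$, a graph morphism on $\Omega_{k,d(\lambda)+d(x)}$. $V_\Lambda=\{(x;m):x\in\Lambda^{\le\infty},m\in\mathbb{N}^k,m\not\le d(x)\}$, $(x;m)\approx(y;p)$ iff $x(m\wedge d(x))=y(p\wedge d(y))$ and $m-m\wedge d(x)=p-p\wedge d(y)$; classes $[x;m]$ form $\widetilde{V_\Lambda}$. $P_\Lambda=\{(x;(m,n)):x\in\Lambda^{\le\infty},m\le n\in\mathbb{N}^k,n\not\le d(x)\}$, $(x;(m,n))\sim(y;(p,q))$ iff $x(m\wedge d(x),n\wedge d(x))=y(p\wedge d(y),q\wedge d(y))$, $m-m\wedge d(x)=p-p\wedge d(y)$, $n-m=q-p$; classes $[x;(m,n)]$ form $\widetilde{P_\Lambda}$. The extension $\overline{\Lambda}$ has objects $\Lambda^0\sqcup\widetilde{V_\Lambda}$ and morphisms $\Lambda\sqcup\widetilde{P_\Lambda}$: on $\Lambda$ everything is as in $\Lambda$; $\overline r([x;(m,n)])=x(m)$ if $m\le d(x)$, else $[x;m]$; $\overline s([x;(m,n)])=[x;n]$; identity at $[x;m]$ is $[x;(m,m)]$; $\lambda[x;(m,n)]=[\lambda\sigma^mx;(0,d(\lambda)+n-m)]$ when $s(\lambda)=\overline r([x;(m,n)])$; $[x;(m,n)][y;(p,q)]=[z;(m,n+q-p)]$ with $z=x(0,n\wedge d(x))\sigma^{p\wedge d(y)}y$ when $\overline s([x;(m,n)])=\overline r([y;(p,q)])$.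 The degree is $\overline d|_\Lambda=d$, $\overline d([x;(m,n)])=n-m$. *)

(* Defs.v *)
From HB Require Import structures.
From mathcomp Require Import all_boot.
From Stdlib Require Import ClassicalEpsilon ClassicalDescription.

Set Implicit Arguments.
Unset Strict Implicit.
Unset Printing Implicit Defensive.

Definition Nk (k : nat) := {ffun 'I_k -> nat}.
Definition zerok k : Nk k := [ffun _ => 0].
Definition addk k (m n : Nk k) : Nk k := [ffun i => m i + n i].
Definition subk k (m n : Nk k) : Nk k := [ffun i => m i - n i].
Definition lek k (m n : Nk k) : bool := [forall i, m i <= n i].
Definition ek k (i : 'I_k) : Nk k := [ffun j => nat_of_bool (j == i)].

(* None stands for oo *)
Definition NInf (k : nat) := {ffun 'I_k -> option nat}.
Definition leI k (p : Nk k) (m : NInf k) : bool :=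
  [forall i, if m i is Some a then p i <= a else true].
Definition meetI k (p : Nk k) (m : NInf k) : Nk k :=
  [ffun i => if m i is Some a then minn (p i) a else p i].
Definition addNI k (p : Nk k) (m : NInf k) : NInf k :=
  [ffun i => omap (fun a => p i + a) (m i)].
Definition subIN k (m : NInf k) (p : Nk k) : NInf k :=
  [ffun i => omap (fun a => a - p i) (m i)].

Record kgraph_data (k : nat) := KGraphData {
  Obj : Type;
  Mor : Type;
  rg : Mor -> Obj;
  sc : Mor -> Obj;
  idm : Obj -> Mor;
  comp : Mor -> Mor -> Mor;
  deg : Mor -> Nk k }.

Record is_kgraph k (G : kgraph_data k) : Prop := {
  kg_countable : exists f : Mor G -> nat, injective f;
  kg_rg_idm : forall v : Obj G, rg (idm v) = v;
  kg_sc_idm : forall v : Obj G, sc (idm v) = v;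
  kg_rg_comp : forall f g : Mor G, sc f = rg g -> rg (comp f g) = rg f;
  kg_sc_comp : forall f g : Mor G, sc f = rg g -> sc (comp f g) = sc g;
  kg_idl : forall f : Mor G, comp (idm (rg f)) f = f;
  kg_idr : forall f : Mor G, comp f (idm (sc f)) = f;
  kg_assoc : forall f g h : Mor G, sc f = rg g -> sc g = rg h ->
      comp (comp f g) h = comp f (comp g h);
  kg_deg_idm : forall v : Obj G, deg (idm v) = zerok k;
  kg_deg_comp : forall f g : Mor G, sc f = rg g ->
      deg (comp f g) = addk (deg f) (deg g);
  kg_fact : forall (l : Mor G) (m n : Nk k), deg l = addk m n ->
      exists! p : Mor G * Mor G,
        sc p.1 = rg p.2 /\ comp p.1 p.2 = l /\ deg p.1 = m /\ deg p.2 = n }.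

Definition no_sources k (G : kgraph_data k) : Prop :=
  forall (v : Obj G) (n : Nk k), exists l : Mor G, rg l = v /\ deg l = n.

(* ---------- graph morphisms Omega_{k,m} -> Lambda ---------- *)
(* x(p,q) is pmap x p q (only meaningful for p <= q <= pdeg x);
   the vertex x(p) is the range of the identity x(p,p). *)
Record kpath k (G : kgraph_data k) := KPath {
  pdeg : NInf k;
  pmap : Nk k -> Nk k -> Mor G }.

Section Paths.
Variables (k : nat) (G : kgraph_data k).

Definition vert (x : kpath G) (p : Nk k) : Obj G := rg (pmap x p p).

Definition graph_morphism (x : kpath G) : Prop :=
  (forall p, leI p (pdeg x) -> pmap x p p = idm (vert x p)) /\
  (forall p q, lek p q -> leI q (pdeg x) ->
      rg (pmap x p q) = vert x p /\ sc (pmap x p q) = vert x q) /\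
  (forall p q, lek p q -> leI q (pdeg x) -> deg (pmap x p q) = subk q p) /\
  (forall p q t, lek p q -> lek q t -> leI t (pdeg x) ->
      comp (pmap x p q) (pmap x q t) = pmap x p t).

Definition boundary_path (x : kpath G) : Prop :=
  graph_morphism x /\
  exists nx : Nk k, leI nx (pdeg x) /\
    forall p : Nk k, lek nx p -> leI p (pdeg x) ->
      forall i : 'I_k, pdeg x i = Some (p i) ->
        forall l : Mor G, rg l = vert x p -> deg l <> ek i.

Definition shift (x : kpath G) (p : Nk k) : kpath G :=
  KPath (subIN (pdeg x) p) (fun a b => pmap x (addk a p) (addk b p)).

Definition is_concat (lam : Mor G) (x : kpath G) (z : kpath G) : Prop :=
  pdeg z = addNI (deg lam) (pdeg x) /\ graph_morphism z /\
  pmap z (zerok k) (deg lam) = lam /\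
  forall q, leI q (pdeg x) ->
    pmap z (deg lam) (addk (deg lam) q) = pmap x (zerok k) q.

Definition concat (lam : Mor G) (x : kpath G) : kpath G :=
  epsilon (inhabits (KPath (pdeg x) (fun _ _ => lam))) (is_concat lam x).

Definition validV (a : kpath G * Nk k) : Prop :=
  boundary_path a.1 /\ ~~ leI a.2 (pdeg a.1).

Definition approxV (a b : kpath G * Nk k) : Prop :=
  vert a.1 (meetI a.2 (pdeg a.1)) = vert b.1 (meetI b.2 (pdeg b.1)) /\
  subk a.2 (meetI a.2 (pdeg a.1)) = subk b.2 (meetI b.2 (pdeg b.1)).

Definition classV (a : kpath G * Nk k) : kpath G * Nk k -> Prop :=
  fun b => validV b /\ approxV a b.

Definition Vt : Type :=
  {C : kpath G * Nk k -> Prop | exists a, validV a /\ C = classV a}.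

Definition validP (a : kpath G * (Nk k * Nk k)) : Prop :=
  boundary_path a.1 /\ lek a.2.1 a.2.2 /\ ~~ leI a.2.2 (pdeg a.1).

Definition simP (a b : kpath G * (Nk k * Nk k)) : Prop :=
  let: (x, (m, n)) := a in let: (y, (p, q)) := b in
  pmap x (meetI m (pdeg x)) (meetI n (pdeg x))
    = pmap y (meetI p (pdeg y)) (meetI q (pdeg y)) /\
  subk m (meetI m (pdeg x)) = subk p (meetI p (pdeg y)) /\
  subk n m = subk q p.

Definition classP (a : kpath G * (Nk k * Nk k)) : kpath G * (Nk k * Nk k) -> Prop :=
  fun b => validP b /\ simP a b.

Definition Pt : Type :=
  {C : kpath G * (Nk k * Nk k) -> Prop | exists a, validP a /\ C = classP a}.

Definition repV (c : Vt) : kpath G * Nk k :=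
  proj1_sig (constructive_indefinite_description _ (proj2_sig c)).
Definition repP (c : Pt) : kpath G * (Nk k * Nk k) :=
  proj1_sig (constructive_indefinite_description _ (proj2_sig c)).

Definition ObjE : Type := (Obj G + Vt)%type.
Definition MorE : Type := (Mor G + Pt)%type.

(* [a] (with a junk default if a is not a valid representative) *)
Definition mkV (a : kpath G * Nk k) (dflt : ObjE) : ObjE :=
  match excluded_middle_informative (validV a) with
  | left h => inr (exist (fun C => exists a0, validV a0 /\ C = classV a0)
                         (classV a) (ex_intro _ a (conj h erefl)))
  | right _ => dflt
  end.

Definition mkP (a : kpath G * (Nk k * Nk k)) (dflt : MorE) : MorE :=
  match excluded_middle_informative (validP a) with
  | left h => inr (exist (fun C => exists a0, validP a0 /\ C = classP a0)
                         (classP a) (ex_intro _ a (conj h erefl)))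
  | right _ => dflt
  end.

Definition rgE (f : MorE) : ObjE :=
  match f with
  | inl l => inl (rg l)
  | inr P => let: (x, (m, n)) := repP P in
             if leI m (pdeg x) then inl (vert x m) else mkV (x, m) (inl (vert x m))
  end.

Definition scE (f : MorE) : ObjE :=
  match f with
  | inl l => inl (sc l)
  | inr P => let: (x, (m, n)) := repP P in mkV (x, n) (inl (vert x n))
  end.

Definition idmE (o : ObjE) : MorE :=
  match o with
  | inl v => inl (idm v)
  | inr c => let: (x, m) := repV c in mkP (x, (m, m)) (inl (pmap x m m))
  end.

Definition degE (f : MorE) : Nk k :=
  match f with
  | inl l => deg l
  | inr P => let: (x, (m, n)) := repP P in subk n m
  end.

Definition compE (f g : MorE) : MorE :=
  match f, g with
  | inl l, inl mu => inl (comp l mu)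
  | inl l, inr P =>
      let: (x, (m, n)) := repP P in
      mkP (concat l (shift x m), (zerok k, addk (deg l) (subk n m))) (inl l)
  | inr P, inl _ => inr P  (* never composable *)
  | inr P, inr Q =>
      let: (x, (m, n)) := repP P in
      let: (y, (p, q)) := repP Q in
      mkP (concat (pmap x (zerok k) (meetI n (pdeg x))) (shift y (meetI p (pdeg y))),
           (m, subk (addk n q) p)) (inr P)
  end.

End Paths.

Definition kext k (G : kgraph_data k) : kgraph_data k :=
  @KGraphData k (ObjE G) (MorE G) (@rgE k G) (@scE k G) (@idmE k G)
    (@compE k G) (@degE k G).

(* Main.v *)
Require Import Defs.
From mathcomp Require Import all_boot zify.
From Stdlib Require Import ClassicalEpsilon ClassicalDescription FunctionalExtensionality PropExtensionality ProofIrrelevance Classical.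
Set Implicit Arguments.
Unset Strict Implicit.
Unset Printing Implicit Defensive.

Section Arith.
Variable k : nat.
Implicit Types m n p q : Nk k.
Lemma addkE m n i : addk m n i = m i + n i. Proof. by rewrite ffunE. Qed.
Lemma subkE m n i : subk m n i = m i - n i. Proof. by rewrite ffunE. Qed.
Lemma zerokE i : zerok k i = 0. Proof. by rewrite ffunE. Qed.
Lemma ekE (j i : 'I_k) : ek j i = (i == j). Proof. by rewrite ffunE. Qed.
Lemma meetIE p (d : NInf k) i : meetI p d i = if d i is Some a then minn (p i) a else p i.
Proof. by rewrite ffunE. Qed.
Lemma addNIE p (d : NInf k) i : addNI p d i = omap (fun a => p i + a) (d i).
Proof. by rewrite ffunE. Qed.
Lemma subINE (d : NInf k) p i : subIN d p i = omap (fun a => a - p i) (d i).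
Proof. by rewrite ffunE. Qed.
Lemma lekP m n : reflect (forall i, m i <= n i) (lek m n).
Proof. exact: forallP. Qed.
Lemma leIP p (d : NInf k) : reflect (forall i a, d i = Some a -> p i <= a) (leI p d).
Proof.
apply: (iffP forallP) => H i; first by move=> a E; move: (H i); rewrite E.
by case E: (d i) => [a|] //; apply: H.
Qed.
Lemma nkP m n : (forall i, m i = n i) -> m = n.
Proof. by move=> H; apply/ffunP. Qed.
End Arith.

Ltac nkE := rewrite ?(addkE, subkE, zerokE, ekE, meetIE, addNIE, subINE).
Ltac clean := repeat match goal with
 | H : ?T |- _ => lazymatch type of T with
     | Prop => lazymatch T with
               | is_true (_ <= _) => fail
               | is_true (_ < _) => fail
               | @eq nat _ _ => fail
               | _ => clear H
               end
     | _ => fail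
     end
 end.
Ltac clia := clean; lia.
Ltac nk := apply: nkP => ?; nkE; clia.

Section KG.
Variables (k : nat) (G : kgraph_data k) (HG : is_kgraph G).
Local Notation Mor := (Mor G).
Local Notation cmp := (@Defs.comp k G).
Local Notation rg := (@rg k G).
Local Notation sc := (@sc k G).
Local Notation deg := (@deg k G).
Local Notation idm := (@idm k G).

Definition fpP (l : Mor) (a : Nk k) (p : Mor * Mor) : Prop :=
  sc p.1 = rg p.2 /\ cmp p.1 p.2 = l /\ deg p.1 = a /\ deg p.2 = subk (deg l) a.
Definition fp (l : Mor) (a : Nk k) : Mor * Mor :=
  epsilon (inhabits (l, l)) (fpP l a).
Definition pre l a := (fp l a).1.
Definition suf l a := (fp l a).2.

Lemma fp_spec l a : lek a (deg l) ->
  sc (pre l a) = rg (suf l a) /\ cmp (pre l a) (suf l a) = l /\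
  deg (pre l a) = a /\ deg (suf l a) = subk (deg l) a.
Proof.
move=> /lekP H; rewrite /pre /suf /fp.
have E : deg l = addk a (subk (deg l) a) by apply: nkP => i; nkE; move: (H i); lia.
case: (kg_fact HG E) => p [Hp _].
exact: (@epsilon_spec _ (inhabits (l, l)) (fpP l a) (ex_intro _ p Hp)).
Qed.

Lemma fp_uniq l u w : sc u = rg w -> cmp u w = l -> u = pre l (deg u) /\ w = suf l (deg u).
Proof.
move=> Hs Hc.
have Hd : deg l = addk (deg u) (deg w) by rewrite -Hc (kg_deg_comp HG Hs).
have Hle : lek (deg u) (deg l) by apply/lekP => i; rewrite Hd addkE; lia.
have [S1 [S2 [S3 S4]]] := fp_spec Hle.
have S4' : deg (suf l (deg u)) = deg w.
  rewrite S4 Hd; apply: nkP => i; nkE; lia.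
case: (kg_fact HG Hd) => p [_ Hu].
have e1 := Hu (u, w) (conj Hs (conj Hc (conj erefl erefl))).
have e2 := Hu (pre l (deg u), suf l (deg u)) (conj S1 (conj S2 (conj S3 S4'))).
by move: e2; rewrite e1; case=> e3 e4; split.
Qed.

Lemma fp_uniq2 u w u' w' : sc u = rg w -> sc u' = rg w' -> cmp u w = cmp u' w' ->
  deg u = deg u' -> u = u' /\ w = w'.
Proof.
move=> H1 H2 Hc Hd.
have [a1 b1] := fp_uniq H1 erefl. have [a2 b2] := fp_uniq H2 erefl.
by split; [rewrite a1 a2 Hc Hd | rewrite b1 b2 Hc Hd].
Qed.

Lemma deg0_id l : deg l = zerok k -> l = idm (rg l).
Proof.
move=> H.
have H1 : sc (idm (rg l)) = rg l by rewrite (kg_sc_idm HG).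
have H2 : sc l = rg (idm (sc l)) by rewrite (kg_rg_idm HG).
have := fp_uniq2 H1 H2 _ _.
rewrite (kg_idl HG) (kg_idr HG) (kg_deg_idm HG) H => /(_ erefl erefl) [] //.
Qed.

Lemma pre_comp u w a : sc u = rg w -> lek a (deg u) -> pre (cmp u w) a = pre u a.
Proof.
move=> Hs Ha; have [S1 [S2 [S3 S4]]] := fp_spec Ha.
have Ssuf : sc (suf u a) = rg w by rewrite -Hs -{2}S2 (kg_sc_comp HG S1).
have Hs' : sc (pre u a) = rg (cmp (suf u a) w) by rewrite (kg_rg_comp HG Ssuf).
have := fp_uniq Hs' erefl; rewrite -(kg_assoc HG S1 Ssuf) S2 S3.
by case=> <-.
Qed.

Lemma suf_comp u w : sc u = rg w -> suf (cmp u w) (deg u) = w.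
Proof. by move=> Hs; case: (fp_uniq Hs erefl) => _ <-. Qed.
Lemma pre_comp0 u w : sc u = rg w -> pre (cmp u w) (deg u) = u.
Proof. by move=> Hs; case: (fp_uniq Hs erefl) => <-. Qed.

Lemma pre_full l : pre l (deg l) = l.
Proof.
have H : sc l = rg (idm (sc l)) by rewrite (kg_rg_idm HG).
by have := pre_comp0 H; rewrite (kg_idr HG).
Qed.

Lemma suf0 l : suf l (zerok k) = l.
Proof.
have H : sc (idm (rg l)) = rg l by rewrite (kg_sc_idm HG).
by have := suf_comp H; rewrite (kg_idl HG) (kg_deg_idm HG).
Qed.

Lemma propagate l f : sc l = rg f -> exists f', rg f' = rg l /\ deg f' = deg f.
Proof.
move=> Hs.
have E : deg (cmp l f) = addk (deg f) (deg l) by rewrite (kg_deg_comp HG Hs); nk.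
case: (kg_fact HG E) => [[a b] [[H1 [H2 [H3 H4]]] _]] /=.
exists a; split=> //.
by rewrite -(kg_rg_comp HG H1) H2 (kg_rg_comp HG Hs).
Qed.

End KG.

Section GM.
Variables (k : nat) (G : kgraph_data k) (HG : is_kgraph G).
Local Notation Mor := (Mor G).
Local Notation cmp := (@Defs.comp k G).
Local Notation rg := (@rg k G).
Local Notation sc := (@sc k G).
Local Notation deg := (@deg k G).
Local Notation idm := (@idm k G).
Local Notation pm := (@Defs.pmap k G).
Local Notation pre := (@pre k G).
Local Notation suf := (@suf k G).

Lemma lek_refl (m : Nk k) : lek m m. Proof. by apply/lekP. Qed.
Lemma lek_trans (m n p : Nk k) : lek m n -> lek n p -> lek m p.
Proof. move=> /lekP H1 /lekP H2; apply/lekP => i; move: (H1 i) (H2 i); lia. Qed.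
Lemma lek0 (m : Nk k) : lek (zerok k) m. Proof. by apply/lekP => i; nkE. Qed.
Lemma leI_trans (m n : Nk k) d : lek m n -> leI n d -> leI m d.
Proof. move=> /lekP H1 /leIP H2; apply/leIP => i a E; move: (H1 i) (H2 i a E); lia. Qed.

Lemma fp_sc l a : lek a (deg l) -> sc (pre l a) = rg (suf l a).
Proof. by move=> H; case: (fp_spec HG H). Qed.
Lemma fp_comp l a : lek a (deg l) -> cmp (pre l a) (suf l a) = l.
Proof. by move=> H; case: (fp_spec HG H) => _ []. Qed.
Lemma fp_deg1 l a : lek a (deg l) -> deg (pre l a) = a.
Proof. by move=> H; case: (fp_spec HG H) => _ [] _ []. Qed.
Lemma fp_deg2 l a : lek a (deg l) -> deg (suf l a) = subk (deg l) a.
Proof. by move=> H; case: (fp_spec HG H) => _ [] _ []. Qed.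
Lemma rg_pre l a : lek a (deg l) -> rg (pre l a) = rg l.
Proof. by move=> H; rewrite -{2}(fp_comp H) (kg_rg_comp HG (fp_sc H)). Qed.
Lemma sc_suf l a : lek a (deg l) -> sc (suf l a) = sc l.
Proof. by move=> H; rewrite -{2}(fp_comp H) (kg_sc_comp HG (fp_sc H)). Qed.

Lemma pre_pre l q q' : lek q q' -> lek q' (deg l) -> pre (pre l q') q = pre l q.
Proof.
move=> H1 H2; rewrite -{2}(fp_comp H2) (pre_comp HG (fp_sc H2)) //.
by rewrite fp_deg1.
Qed.

Section Prefix.
Variables (d : NInf k) (W : Nk k -> Mor).
Hypothesis H1 : forall q, leI q d -> lek q (deg (W q)).
Hypothesis H2 : forall q q', lek q q' -> leI q' d -> pre (W q') q = pre (W q) q.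
Definition Zf q := pre (W q) q.
Definition mkpath := KPath d (fun a b => suf (Zf b) a).

Lemma Zf_deg q : leI q d -> deg (Zf q) = q.
Proof. by move=> H; rewrite /Zf fp_deg1 //; apply: H1. Qed.
Lemma Zf_coh q q' : lek q q' -> leI q' d -> pre (Zf q') q = Zf q.
Proof. by move=> H H'; rewrite /Zf pre_pre // ?H2 //; apply: H1. Qed.
Lemma Zf_le q q' : lek q q' -> leI q' d -> lek q (deg (Zf q')).
Proof. by move=> H H'; rewrite Zf_deg. Qed.

Lemma mkpath_gm : graph_morphism mkpath.
Proof.
have vE : forall p, leI p d -> vert mkpath p = sc (Zf p).
  move=> p Hp; rewrite /vert /= -(fp_sc (Zf_le (lek_refl p) Hp)).
  by rewrite -{2}(Zf_coh (lek_refl p) Hp).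
split; [|split; [|split]] => /=.
- move=> p Hp; have Hle := Zf_le (lek_refl p) Hp.
  rewrite {1}(deg0_id HG (l := suf (Zf p) p)) // fp_deg2 // Zf_deg //; nk.
- move=> p q Hpq Hq; have Hp := leI_trans Hpq Hq; rewrite !vE //; split.
    by rewrite -(fp_sc (Zf_le Hpq Hq)) Zf_coh.
  by rewrite sc_suf //; apply: Zf_le.
- by move=> p q Hpq Hq; rewrite fp_deg2 ?Zf_deg //; apply: Zf_le.
- move=> p q t Hpq Hqt Ht.
  have Hq := leI_trans Hqt Ht; have Hp := leI_trans Hpq Hq.
  have Hpt := lek_trans Hpq Hqt.
  have Ea : cmp (Zf q) (suf (Zf t) q) = Zf t by rewrite -{1}(Zf_coh Hqt Ht) fp_comp //; apply: Zf_le.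
  have Eb : cmp (Zf p) (suf (Zf q) p) = Zf q by rewrite -{1}(Zf_coh Hpq Hq) fp_comp //; apply: Zf_le.
  have Sa : sc (Zf q) = rg (suf (Zf t) q) by rewrite -(fp_sc (Zf_le Hqt Ht)) Zf_coh.
  have Sb : sc (Zf p) = rg (suf (Zf q) p) by rewrite -(fp_sc (Zf_le Hpq Hq)) Zf_coh.
  have Sc : sc (suf (Zf q) p) = rg (suf (Zf t) q) by rewrite sc_suf ?Sa //; apply: Zf_le.
  have Sd : sc (Zf p) = rg (cmp (suf (Zf q) p) (suf (Zf t) q)) by rewrite (kg_rg_comp HG Sc).
  have Se : sc (Zf p) = rg (suf (Zf t) p) by rewrite -(fp_sc (Zf_le Hpt Ht)) Zf_coh.
  have Ef : cmp (Zf p) (suf (Zf t) p) = Zf t by rewrite -{1}(Zf_coh Hpt Ht) fp_comp //; apply: Zf_le.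
  have := fp_uniq2 HG Sd Se _ erefl; rewrite -(kg_assoc HG Sb Sc) Eb Ea Ef.
  by move=> /(_ erefl) [_ ->].
Qed.

Lemma mkpath_0 q : leI q d -> pm mkpath (zerok k) q = Zf q.
Proof. by move=> _; rewrite /= (suf0 HG). Qed.
End Prefix.

Section GMfacts.
Variable x : kpath G.
Hypothesis Hx : graph_morphism x.
Let d := pdeg x.

Lemma gm_id p : leI p d -> pm x p p = idm (vert x p).
Proof. by case: Hx => H _; apply: H. Qed.
Lemma gm_rg p q : lek p q -> leI q d -> rg (pm x p q) = vert x p.
Proof. by case: Hx => _ [H _] ??; case: (H p q). Qed.
Lemma gm_sc p q : lek p q -> leI q d -> sc (pm x p q) = vert x q.
Proof. by case: Hx => _ [H _] ??; case: (H p q). Qed.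
Lemma gm_deg p q : lek p q -> leI q d -> deg (pm x p q) = subk q p.
Proof. by case: Hx => _ [_ [H _]]; apply: H. Qed.
Lemma gm_comp p q t : lek p q -> lek q t -> leI t d -> cmp (pm x p q) (pm x q t) = pm x p t.
Proof. by case: Hx => _ [_ [_ H]]; apply: H. Qed.
Lemma gm_sc_rg p q t : lek p q -> lek q t -> leI t d -> sc (pm x p q) = rg (pm x q t).
Proof. by move=> ???; rewrite gm_sc ?gm_rg //; apply: leI_trans; eassumption. Qed.
Lemma gm_suf p q : lek p q -> leI q d -> pm x p q = suf (pm x (zerok k) q) p.
Proof.
move=> H Hq; have H0 := lek0 p.
have := fp_uniq HG (gm_sc_rg H0 H Hq) (gm_comp H0 H Hq).
by rewrite gm_deg ?subk0 //; [case=> _ ->; congr suf; nk | apply: leI_trans Hq].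
Qed.
End GMfacts.

Lemma leI_shift q p (d : NInf k) : leI p d -> leI q (subIN d p) -> leI (addk q p) d.
Proof.
move=> /leIP H1 /leIP H2; apply/leIP => i a E; nkE.
move: (H1 i a E) (H2 i (a - p i)); rewrite subINE E /=; move=> ? /(_ erefl); lia.
Qed.

Lemma shift_gm (x : kpath G) (p : Nk k) : graph_morphism x -> leI p (pdeg x) -> graph_morphism (shift x p).
Proof.
move=> Hx Hp.
have Ha : forall a b, lek a b -> lek (addk a p) (addk b p).
  by move=> a b /lekP H; apply/lekP => i; nkE; move: (H i); lia.
split; [|split; [|split]] => /=.
- by move=> q Hq; rewrite gm_id //; apply: leI_shift.
- move=> a b Hab Hb; rewrite /vert /= gm_rg ?gm_sc //; try apply: Ha => //;
   try apply: leI_shift => //; apply: lek_refl.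
- by move=> a b Hab Hb; rewrite gm_deg //; [nk | apply: Ha | apply: leI_shift].
- by move=> a b c Hab Hbc Hc; rewrite gm_comp //; [apply: Ha | apply: Ha | apply: leI_shift].
Qed.

Lemma vert_shift (x : kpath G) (p q : Nk k) : vert (shift x p) q = vert x (addk q p).
Proof. by []. Qed.

Lemma shift_bd (x : kpath G) (p : Nk k) : boundary_path x -> leI p (pdeg x) -> boundary_path (shift x p).
Proof.
move=> [Hx [nx [Hn Hb]]] Hp; split; first exact: shift_gm.
exists (subk nx p); split.
  apply/leIP => i a; rewrite subINE; case E: (pdeg x i) => [b|] //= [<-].
  move/leIP: Hn => /(_ i b E); nkE; lia.
move=> q Hq Hq' i Ei l Hl; apply: (Hb (addk q p)) Hl.
- by move/lekP: Hq => H; apply/lekP => j; move: (H j); nkE; lia.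
- exact: leI_shift.
- move: Ei; rewrite /= subINE addkE; case E: (pdeg x i) => [b|] //= [<-].
  by move/leIP: Hp => /(_ i b E) ?; congr Some; lia.
Qed.

Section Concat.
Variables (lam : Mor) (x : kpath G).
Hypothesis Hx : graph_morphism x.
Hypothesis Hl : sc lam = vert x (zerok k).
Let dl := deg lam.
Let dz := addNI dl (pdeg x).
Definition Wc q := cmp lam (pm x (zerok k) (subk q dl)).

Lemma leI_cz q : leI q dz -> leI (subk q dl) (pdeg x).
Proof.
move/leIP=> H; apply/leIP => i a E; move: (H i (dl i + a)); rewrite /dz addNIE E /= subkE.
move=> /(_ erefl); lia.
Qed.

Lemma Wc_sc q : leI q dz -> sc lam = rg (pm x (zerok k) (subk q dl)).
Proof. by move=> H; rewrite gm_rg //; [apply: lek0 | apply: leI_cz]. Qed.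

Lemma Wc_deg q : leI q dz -> deg (Wc q) = addk dl (subk q dl).
Proof. by move=> H; rewrite /Wc (kg_deg_comp HG (Wc_sc H)) gm_deg ?sub0k //; [congr addk; nk | apply: lek0 | apply: leI_cz]. Qed.

Lemma concat_exists : exists z, is_concat lam x z.
Proof.
have K1 : forall q, leI q dz -> lek q (deg (Wc q)).
  by move=> q H; rewrite Wc_deg //; apply/lekP => i; nkE; lia.
have K2 : forall q q', lek q q' -> leI q' dz -> pre (Wc q') q = pre (Wc q) q.
  move=> q q' Hqq Hq'; have Hq := leI_trans Hqq Hq'.
  have Hs : lek (subk q dl) (subk q' dl).
    by move/lekP: Hqq => H; apply/lekP => i; nkE; move: (H i); lia.
  rewrite /Wc -(gm_comp Hx (lek0 _) Hs (leI_cz Hq')).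
  have S1 := Wc_sc Hq.
  have S2 := gm_sc_rg Hx (lek0 _) Hs (leI_cz Hq').
  rewrite -(kg_assoc HG S1 S2) (pre_comp HG) //; first by rewrite (kg_sc_comp HG S1).
  exact: K1.
exists (mkpath dz Wc); split=> //; split; first exact: mkpath_gm.
have E0 : forall q, subk (addk dl q) dl = q by move=> q; nk.
split.
- rewrite /= (suf0 HG) /Zf /Wc.
  have -> : subk dl dl = zerok k by nk.
  rewrite gm_id //; first by rewrite -Hl (kg_idr HG) (pre_full HG).
  by apply/leIP => i a _; nkE.
- move=> q Hq /=; rewrite /Zf.
  have Hq' : leI (addk dl q) dz.
    apply/leIP => i a; rewrite /dz addNIE; case E: (pdeg x i) => [b|] //= [<-].
    by move/leIP: Hq => /(_ i b E); nkE; lia.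
  have := K1 _ Hq'; rewrite Wc_deg // => _.
  have -> : pre (Wc (addk dl q)) (addk dl q) = Wc (addk dl q).
    by rewrite -{2}(pre_full HG (Wc (addk dl q))) Wc_deg // E0.
  by rewrite /Wc E0 (suf_comp HG) //; move: (Wc_sc Hq'); rewrite E0.
Qed.
End Concat.

End GM.

Section Conc.
Variables (k : nat) (G : kgraph_data k) (HG : is_kgraph G).
Local Notation Mor := (Mor G).
Local Notation cmp := (@Defs.comp k G).
Local Notation rg := (@rg k G).
Local Notation sc := (@sc k G).
Local Notation deg := (@deg k G).
Local Notation idm := (@idm k G).
Local Notation pm := (@Defs.pmap k G).
Local Notation pre := (@pre k G).
Local Notation suf := (@suf k G).

Lemma concat_spec (lam : Mor) (x : kpath G) : graph_morphism x -> sc lam = vert x (zerok k) ->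
  is_concat lam x (concat lam x).
Proof.
move=> Hx Hl; have [z Hz] := concat_exists HG Hx Hl.
exact: (@epsilon_spec _ (inhabits (KPath (pdeg x) (fun _ _ => lam))) (is_concat lam x) (ex_intro _ z Hz)).
Qed.

Lemma leI_add (dl q : Nk k) d : leI q d -> leI (addk dl q) (addNI dl d).
Proof.
move/leIP=> H; apply/leIP => i a; rewrite addNIE; case E: (d i) => [b|] //= [<-].
by move: (H i b E); nkE; lia.
Qed.

Lemma lek_addr (dl q : Nk k) : lek dl (addk dl q).
Proof. by apply/lekP => i; nkE; lia. Qed.

Lemma concat_pm (lam : Mor) (x z : kpath G) (a t : Nk k) : is_concat lam x z ->
  lek a (deg lam) -> leI t (pdeg x) ->
  pm z a (addk (deg lam) t) = cmp (suf lam a) (pm x (zerok k) t).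
Proof.
move=> [Ed [Hz [E0 E1]]] Ha Ht.
have Hq : leI (addk (deg lam) t) (pdeg z) by rewrite Ed; apply: leI_add.
rewrite -(gm_comp Hz Ha (lek_addr _ _) Hq) E1 //; congr cmp.
rewrite (gm_suf HG Hz Ha) ?E0 //; apply: leI_trans Hq; exact: lek_addr.
Qed.

Lemma concat_vert0 (lam : Mor) (x z : kpath G) : is_concat lam x z -> vert z (zerok k) = rg lam.
Proof.
move=> [Ed [Hz [E0 E1]]].
have Hq : leI (deg lam) (pdeg z).
  have := leI_add (deg lam) (leI_trans (lek0 (zerok k)) (_ : leI (zerok k) (pdeg x))).
  rewrite -Ed; have -> : addk (deg lam) (zerok k) = deg lam by nk.
  by apply; apply/leIP => ???; nkE.
by rewrite -(gm_rg Hz (lek0 _) Hq) E0.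
Qed.

Lemma concat_bd (lam : Mor) (x z : kpath G) : is_concat lam x z -> boundary_path x ->
  boundary_path z.
Proof.
move=> Hc [Hx [nx [Hn Hb]]]; have [Ed [Hz [E0 E1]]] := Hc.
split=> //; exists (addk (deg lam) nx); split; first by rewrite Ed; apply: leI_add.
move=> p Hp Hp' i Ei l Hl.
set p' := subk p (deg lam).
have Ep : p = addk (deg lam) p' by move/lekP: Hp => H; apply: nkP => j; move: (H j); nkE; lia.
have Hp1 : leI p' (pdeg x).
  move/leIP: Hp' => H; apply/leIP => j a E; move: (H j (deg lam j + a)).
  by rewrite Ed addNIE E /= => /(_ erefl); rewrite /p' subkE; lia.
apply: (Hb p' _ Hp1 i _ l).
- by move/lekP: Hp => H; apply/lekP => j; move: (H j); rewrite /p'; nkE; lia.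
- move: Ei; rewrite Ed addNIE; case E: (pdeg x i) => [b|] //= [Eb].
  by congr Some; rewrite /p' subkE; lia.
- rewrite Hl Ep -(gm_sc Hz (lek_addr _ _) (_ : leI (addk (deg lam) p') (pdeg z))) ?E1 ?gm_sc //.
  + exact: lek0.
  + by rewrite Ed; apply: leI_add.
Qed.

End Conc.

Lemma mono_unbounded (a : nat -> nat) : (forall j j', j <= j' -> a j <= a j') ->
  ~ (exists J, forall j, J <= j -> a j = a J) -> forall B, exists j, B < a j.
Proof.
move=> Hm Hn B; apply: NNPP => Hb.
have Hle : forall j, a j <= B.
  move=> j; case: (leqP (a j) B) => // H; exfalso; apply: Hb; by exists j.
suff : forall n j, B - a j <= n -> exists J, forall j', J <= j' -> a j' = a J.
  by move=> /(_ (B - a 0) 0 (leqnn _)).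
elim=> [|n IH] j Hj.
  exists j => j' Hj'; move: (Hle j') (Hm _ _ Hj'); lia.
case: (classic (forall j', j <= j' -> a j' = a j)) => [H|H]; first by exists j.
have [j' Hj'] : exists j', j <= j' /\ a j' <> a j.
  apply: NNPP => H'; apply: H => j' Hj'; apply: NNPP => H''; apply: H'; by exists j'.
apply: (IH j'); case: Hj' => H1 H2; move: (Hm _ _ H1) (Hle j'); lia.
Qed.

Section BP.
Variables (k : nat) (G : kgraph_data k) (HG : is_kgraph G).
Local Notation Mor := (Mor G).
Local Notation cmp := (@Defs.comp k G).
Local Notation rg := (@rg k G).
Local Notation sc := (@sc k G).
Local Notation deg := (@deg k G).
Local Notation idm := (@idm k G).
Local Notation pm := (@Defs.pmap k G).
Local Notation pre := (@pre k G).
Local Notation suf := (@suf k G).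
Variable v : Obj G.

Definition hasE (u : Obj G) (i : 'I_k) := exists f : Mor, rg f = u /\ deg f = ek i.

Definition ext (l : Mor) (j : nat) : Mor :=
  match insub (j %% k) with
  | Some i => match excluded_middle_informative (hasE (sc l) i) with
              | left H => cmp l (proj1_sig (constructive_indefinite_description _ H))
              | right _ => l end
  | None => l end.

Fixpoint lam (j : nat) : Mor := if j is j'.+1 then ext (lam j') j' else idm v.

Lemma lam_step j : exists r, sc (lam j) = rg r /\ lam j.+1 = cmp (lam j) r /\
   (forall i, insub (j %% k) = Some i -> hasE (sc (lam j)) i -> deg r = ek i) /\
   (forall i, deg r i <= 1).
Proof.
rewrite /= /ext; case: insubP => [i _ Ei|_].
  case: excluded_middle_informative => [H|H].
    case: (constructive_indefinite_description _ H) => f [Hf1 Hf2] /=.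
    exists f; split=> //; split=> //; split.
      by move=> i' [<-].
    by move=> i'; rewrite Hf2 ekE; case: (i' == i).
  exists (idm (sc (lam j))); rewrite (kg_rg_idm HG) (kg_idr HG); split=> //; split=> //; split.
    by move=> i' [<-].
  by move=> i'; rewrite (kg_deg_idm HG) zerokE.
exists (idm (sc (lam j))); rewrite (kg_rg_idm HG) (kg_idr HG); split=> //; split=> //; split.
  by [].
by move=> i'; rewrite (kg_deg_idm HG) zerokE.
Qed.

Lemma lam_prefix j j' : j <= j' -> exists r, sc (lam j) = rg r /\ lam j' = cmp (lam j) r.
Proof.
move=> H; rewrite -(subnKC H); elim: (j' - j) => [|n [r [H1 H2]]].
  exists (idm (sc (lam j))); rewrite addn0 (kg_rg_idm HG) (kg_idr HG); split=> //.
have [r' [H3 [H4 _]]] := lam_step (j + n).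
exists (cmp r r'); rewrite addnS H4 H2 (kg_assoc HG) // ?(kg_rg_comp HG) //.
  by rewrite -H3 H2 (kg_sc_comp HG).
by rewrite -H3 H2 (kg_sc_comp HG).
Qed.

Lemma lam_rg j : rg (lam j) = v.
Proof.
have [r [H1 H2]] := lam_prefix (leq0n j).
by rewrite H2 (kg_rg_comp HG H1) /= (kg_rg_idm HG).
Qed.

Lemma lam_mono j j' i : j <= j' -> deg (lam j) i <= deg (lam j') i.
Proof.
move=> H; have [r [H1 H2]] := lam_prefix H.
by rewrite H2 (kg_deg_comp HG H1) addkE leq_addr.
Qed.

Lemma lam_mono' j j' : j <= j' -> lek (deg (lam j)) (deg (lam j')).
Proof. by move=> H; apply/lekP => i; apply: lam_mono. Qed.

Lemma lam_pre j j' q : lek q (deg (lam j)) -> lek q (deg (lam j')) -> pre (lam j) q = pre (lam j') q.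
Proof.
wlog H : j j' / j <= j'.
  move=> W H1 H2; case: (leqP j j') => H; first exact: W.
  by symmetry; apply: W => //; apply: ltnW.
move=> H1 H2; have [r [E1 E2]] := lam_prefix H.
by rewrite E2 (pre_comp HG).
Qed.

Definition finc (i : 'I_k) := exists J, forall j, J <= j -> deg (lam j) i = deg (lam J) i.
Definition Jf (i : 'I_k) := epsilon (inhabits 0) (fun J => forall j, J <= j -> deg (lam j) i = deg (lam J) i).
Definition dB : NInf k := [ffun i => match excluded_middle_informative (finc i) with
   | left _ => Some (deg (lam (Jf i)) i) | right _ => None end].

Lemma Jf_spec i : finc i -> forall j, Jf i <= j -> deg (lam j) i = deg (lam (Jf i)) i.
Proof.
move=> [J HJ]; rewrite /Jf.
exact: (@epsilon_spec _ (inhabits 0) (fun J => forall j, J <= j -> deg (lam j) i = deg (lam J) i) (ex_intro _ J HJ)).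
Qed.

Lemma dB_some i c : dB i = Some c -> (forall j, Jf i <= j -> deg (lam j) i = c) /\ forall j, deg (lam j) i <= c.
Proof.
rewrite ffunE; case: excluded_middle_informative => // F [<-].
have H := Jf_spec F; split=> // j.
case: (leqP (Jf i) j) => Hj; first by rewrite H.
by apply: lam_mono; apply: ltnW.
Qed.

Lemma dB_none i : dB i = None -> forall B, exists j, B < deg (lam j) i.
Proof.
rewrite ffunE; case: excluded_middle_informative => // F _.
apply: mono_unbounded => //; move=> j j' H; exact: lam_mono.
Qed.

Lemma lam_leI j : leI (deg (lam j)) dB.
Proof. by apply/leIP => i c /dB_some [_ H]. Qed.

Lemma leI_ex q : leI q dB -> exists j, lek q (deg (lam j)).
Proof.
move/leIP=> H.
have Hi : forall i, exists j, q i <= deg (lam j) i.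
  move=> i; case E: (dB i) => [c|].
    by exists (Jf i); case: (dB_some E) => H1 _; rewrite H1 // (H i c E).
  by case: (dB_none E (q i)) => j Hj; exists j; apply: ltnW.
pose jq i := epsilon (inhabits 0) (fun j => q i <= deg (lam j) i).
exists (\max_i jq i); apply/lekP => i.
have Hs : q i <= deg (lam (jq i)) i.
  by rewrite /jq; apply: (@epsilon_spec _ (inhabits 0) (fun j => q i <= deg (lam j) i)).
apply: leq_trans Hs _; apply: lam_mono.
exact: (@leq_bigmax _ (fun i => jq i) i).
Qed.

Definition Jq q := epsilon (inhabits 0) (fun j => lek q (deg (lam j))).
Definition WB q := lam (Jq q).

Lemma WB_le q : leI q dB -> lek q (deg (WB q)).
Proof.
move=> H; have [j Hj] := leI_ex H; rewrite /WB /Jq.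
exact: (@epsilon_spec _ (inhabits 0) (fun j => lek q (deg (lam j))) (ex_intro _ j Hj)).
Qed.

Lemma WB_coh q q' : lek q q' -> leI q' dB -> pre (WB q') q = pre (WB q) q.
Proof.
move=> H H'; apply: lam_pre; first exact: lek_trans H (WB_le H').
by apply: WB_le; apply: leI_trans H'.
Qed.

Definition xB := mkpath dB WB.

Lemma xB_gm : graph_morphism xB.
Proof. apply: mkpath_gm => //; [exact: WB_le | exact: WB_coh]. Qed.

Lemma xB_vert p : leI p dB -> vert xB p = sc (Zf WB p).
Proof.
move=> Hp; have Hd : deg (Zf WB p) = p by rewrite /Zf fp_deg1 //; apply: WB_le.
rewrite /vert /= -fp_sc ?Hd ?lek_refl // -{2}Hd.
by rewrite (pre_full HG).
Qed.

Lemma xB_vert0 : vert xB (zerok k) = v.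
Proof.
have H0 : leI (zerok k) dB by apply/leIP => ???; nkE.
rewrite /vert /= (suf0 HG) /Zf rg_pre ?WB_le //; exact: lam_rg.
Qed.

Lemma xB_vert_lam j : vert xB (deg (lam j)) = sc (lam j).
Proof.
rewrite xB_vert ?lam_leI // /Zf (lam_pre (j' := j)) ?(pre_full HG) ?lek_refl //.
by apply: WB_le; apply: lam_leI.
Qed.

Lemma xB_bd : boundary_path xB.
Proof.
split; first exact: xB_gm.
pose J0 := \max_i Jf i.
exists (deg (lam (J0 * k + k))); split; first exact: lam_leI.
move=> p Hp Hp' i Ei l Hl Hdl.
have [Hc1 Hc2] := dB_some Ei.
have Hk : 0 < k by have := ltn_ord i; lia.
pose j := J0 * k + i.
have HJ : Jf i <= j.
  have := @leq_bigmax _ (fun i => Jf i) i; rewrite -/J0 /j => H.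
  have := leq_pmulr J0 Hk; lia.
have Hjp : lek (deg (lam j)) p.
  apply: lek_trans Hp; apply: lam_mono'; rewrite /j; have := ltn_ord i; lia.
have Hjp' : lek (deg (lam j)) p by [].
have [f [Hf1 Hf2]] : exists f : Mor, rg f = sc (lam j) /\ deg f = ek i.
  have Hs : sc (pm xB (deg (lam j)) p) = rg l by rewrite (gm_sc xB_gm) // Hl.
  have [f [Hf1 Hf2]] := propagate HG Hs.
  by exists f; split; [rewrite Hf1 (gm_rg xB_gm) // xB_vert_lam | rewrite Hf2 Hdl].
have [r [Hsc [E1 [E2 _]]]] := lam_step j.
have Ei' : insub (j %% k) = Some i.
  rewrite /j modnMDl modn_small ?ltn_ord //; by rewrite valK.
have Hdr := E2 i Ei' (ex_intro _ f (conj Hf1 Hf2)).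
have := Hc1 j.+1 (leq_trans HJ (leqnSn _)); rewrite E1 (kg_deg_comp HG Hsc) addkE Hdr ekE eqxx.
by rewrite (Hc1 j HJ); lia.
Qed.

End BP.

Section Arith2.
Variable k : nat.
Implicit Types m n p : Nk k.
Lemma meetI_le m (d : NInf k) : leI (meetI m d) d.
Proof. apply/leIP => i a E; rewrite meetIE E; lia. Qed.
Lemma meetI_lek m (d : NInf k) : lek (meetI m d) m.
Proof. apply/lekP => i; rewrite meetIE; case: (d i) => *; lia. Qed.
Lemma meetI_mono m n (d : NInf k) : lek m n -> lek (meetI m d) (meetI n d).
Proof. move/lekP=> H; apply/lekP => i; rewrite !meetIE; move: (H i); case: (d i) => *; lia. Qed.
Lemma meetI_id m (d : NInf k) : leI m d -> meetI m d = m.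
Proof. move/leIP=> H; apply: nkP => i; rewrite meetIE; case E: (d i) => [a|] //; move: (H i a E); lia. Qed.
Lemma notleI p (d : NInf k) : ~~ leI p d -> exists i c, d i = Some c /\ c < p i.
Proof.
move=> H; apply: NNPP => H'; move/negP: H; apply; apply/leIP => i a E.
case: (leqP (p i) a) => // Hl; exfalso; apply: H'; by exists i, a.
Qed.
Lemma off0 m (d : NInf k) : (subk m (meetI m d) == zerok k) = leI m d.
Proof.
apply/eqP/idP => [H|H]; last by rewrite meetI_id //; nk.
apply/leIP => i a E; move: (congr1 (fun f : Nk k => f i) H); rewrite subkE zerokE meetIE E; lia.
Qed.
End Arith2.

Section Ext.
Variables (k : nat) (G : kgraph_data k) (HG : is_kgraph G).
Local Notation Mor := (Mor G).
Local Notation cmp := (@Defs.comp k G).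
Local Notation rg := (@rg k G).
Local Notation sc := (@sc k G).
Local Notation deg := (@deg k G).
Local Notation idm := (@idm k G).
Local Notation pm := (@Defs.pmap k G).
Local Notation pre := (@pre k G).
Local Notation suf := (@suf k G).

Definition Dp (a : kpath G * (Nk k * Nk k)) : Mor * Nk k * Nk k :=
  let: (x, (m, n)) := a in
  (pm x (meetI m (pdeg x)) (meetI n (pdeg x)), subk m (meetI m (pdeg x)), subk n m).
Definition Dv (a : kpath G * Nk k) : Obj G * Nk k :=
  let: (x, m) := a in (vert x (meetI m (pdeg x)), subk m (meetI m (pdeg x))).

Lemma simP_D a b : simP a b <-> Dp a = Dp b.
Proof.
case: a => x [m n]; case: b => y [p q]; rewrite /simP /Dp; split.
  by case=> -> [-> ->].
by case=> -> -> ->.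
Qed.
Lemma approxV_D a b : approxV a b <-> Dv a = Dv b.
Proof.
case: a => x m; case: b => y p; rewrite /approxV /Dv /=; split.
  by case=> -> ->.
by case=> -> ->.
Qed.

Lemma repP_spec (P : Pt G) : validP (repP P) /\ proj1_sig P = classP (repP P).
Proof. rewrite /repP; case: constructive_indefinite_description => a /= [H1 H2]; by []. Qed.
Lemma repV_spec (c : Vt G) : validV (repV c) /\ proj1_sig c = classV (repV c).
Proof. rewrite /repV; case: constructive_indefinite_description => a /= [H1 H2]; by []. Qed.

Lemma classP_ext a b : Dp a = Dp b -> classP a = classP b.
Proof.
move=> E; apply: functional_extensionality => c; apply: propositional_extensionality.
by rewrite /classP !simP_D E.
Qed.
Lemma classV_ext a b : Dv a = Dv b -> classV a = classV b.
Proof.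
move=> E; apply: functional_extensionality => c; apply: propositional_extensionality.
by rewrite /classV !approxV_D E.
Qed.

Lemma P_eq (P Q : Pt G) : Dp (repP P) = Dp (repP Q) -> P = Q.
Proof.
move=> E; apply: eq_sig_hprop; first by move=> *; apply: proof_irrelevance.
by rewrite (proj2 (repP_spec P)) (proj2 (repP_spec Q)); apply: classP_ext.
Qed.
Lemma V_eq (c d : Vt G) : Dv (repV c) = Dv (repV d) -> c = d.
Proof.
move=> E; apply: eq_sig_hprop; first by move=> *; apply: proof_irrelevance.
by rewrite (proj2 (repV_spec c)) (proj2 (repV_spec d)); apply: classV_ext.
Qed.

Lemma mkP_spec a (dflt : MorE G) : validP a -> exists P, mkP a dflt = inr P /\ Dp (repP P) = Dp a.
Proof.
move=> H; rewrite /mkP; case: excluded_middle_informative => // h.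
eexists; split; first reflexivity.
set P := exist _ _ _; have [H1 H2] := repP_spec P.
have : proj1_sig P (repP P) by rewrite H2; split=> //; apply/simP_D.
by case=> _ /simP_D.
Qed.
Lemma mkV_spec a (dflt : ObjE G) : validV a -> exists c, mkV a dflt = inr c /\ Dv (repV c) = Dv a.
Proof.
move=> H; rewrite /mkV; case: excluded_middle_informative => // h.
eexists; split; first reflexivity.
set c := exist _ _ _; have [H1 H2] := repV_spec c.
have : proj1_sig c (repV c) by rewrite H2; split=> //; apply/approxV_D.
by case=> _ /approxV_D.
Qed.

Definition ObjD (o : ObjE G) : Obj G + (Obj G * Nk k) :=
  match o with inl v => inl v | inr c => inr (Dv (repV c)) end.
Definition MorD (f : MorE G) : Mor + (Mor * Nk k * Nk k) :=
  match f with inl l => inl l | inr P => inr (Dp (repP P)) end.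

Lemma ObjD_inj : injective ObjD.
Proof. by case=> [u|c] [u'|c'] //= [] E; [rewrite E | rewrite (V_eq E)]. Qed.
Lemma MorD_inj : injective MorD.
Proof. by case=> [u|c] [u'|c'] //= [] E; [rewrite E | rewrite (P_eq E)]. Qed.

Lemma validP_facts (x : kpath G) (m n : Nk k) : validP (x, (m, n)) ->
  [/\ boundary_path x, graph_morphism x, lek m n, ~~ leI n (pdeg x) &
      [/\ lek (meetI m (pdeg x)) (meetI n (pdeg x)), leI (meetI n (pdeg x)) (pdeg x) &
          leI (meetI m (pdeg x)) (pdeg x)]].
Proof.
case=> /= Hb [Hmn Hn]; split=> //; first by case: Hb.
by split; [apply: meetI_mono | apply: meetI_le | apply: meetI_le].
Qed.

Lemma Dp_inv (a : kpath G * (Nk k * Nk k)) : validP a -> let: (s, o, l) := Dp a in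
  [/\ lek (deg s) l, (forall i, 0 < o i -> deg s i = 0),
      subk (addk o l) (deg s) != zerok k &
      rg s = vert a.1 (meetI a.2.1 (pdeg a.1))].
Proof.
case: a => x [m n] Hv; have [Hb Hx Hmn Hn [H1 H2 H3]] := validP_facts Hv.
rewrite /Dp /= (gm_deg Hx) // (gm_rg Hx) //; split=> //.
- by move/lekP: Hmn => H; apply/lekP => i; move: (H i); nkE; case: (pdeg x i) => *; lia.
- by move=> i; nkE; move/lekP: Hmn => /(_ i); case: (pdeg x i) => *; lia.
- have [i [c [E Hc]]] := notleI Hn; apply/eqP => /(congr1 (fun f : Nk k => f i)).
  by nkE; rewrite E; move/lekP: Hmn => /(_ i); lia.
Qed.

Lemma Dv_inv (a : kpath G * Nk k) : validV a -> (Dv a).2 != zerok k.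
Proof. by case: a => x m [_ H]; rewrite /Dv /= off0. Qed.

End Ext.

Lemma leI_i k (p : Nk k) (d : NInf k) i : leI p d -> if d i is Some a then p i <= a else true.
Proof. by move/leIP => H; case E: (d i) => [a|] //; apply: H. Qed.
Lemma lek_i k (p q : Nk k) i : lek p q -> p i <= q i.
Proof. by move/lekP. Qed.

Section Ops.
Variables (k : nat) (G : kgraph_data k) (HG : is_kgraph G).
Local Notation Mor := (Mor G).
Local Notation cmp := (@Defs.comp k G).
Local Notation rg := (@rg k G).
Local Notation sc := (@sc k G).
Local Notation deg := (@deg k G).
Local Notation idm := (@idm k G).
Local Notation pm := (@Defs.pmap k G).
Local Notation pre := (@pre k G).
Local Notation suf := (@suf k G).
Local Notation Dp := (@Dp k G).
Local Notation Dv := (@Dv k G).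
Local Notation MorD := (@MorD k G).
Local Notation ObjD := (@ObjD k G).

Lemma repP_valid (P : Pt G) x m n : repP P = (x, (m, n)) -> validP (x, (m, n)).
Proof. by move=> E; have [H _] := repP_spec P; rewrite E in H. Qed.
Lemma repV_valid (c : Vt G) x m : repV c = (x, m) -> validV (x, m).
Proof. by move=> E; have [H _] := repV_spec c; rewrite E in H. Qed.

Lemma rgE_D (P : Pt G) : let: (s, o, l) := Dp (repP P) in
  ObjD (rgE (inr P)) = if o == zerok k then inl (rg s) else inr (rg s, o).
Proof.
rewrite /rgE; case E: (repP P) => [x [m n]]; have Hv := repP_valid E.
have [Hb Hx Hmn Hn [H1 H2 H3]] := validP_facts Hv.
rewrite /= off0 (gm_rg Hx) //; case: ifP => Hm.
  by rewrite meetI_id.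
have Hv' : validV (x, m) by split=> //=; rewrite Hm.
by have [c [-> Ec]] := mkV_spec (inl (vert x m)) Hv'; rewrite /= Ec.
Qed.

Lemma scE_D (P : Pt G) : let: (s, o, l) := Dp (repP P) in
  ObjD (scE (inr P)) = inr (sc s, subk (addk o l) (deg s)).
Proof.
rewrite /scE; case E: (repP P) => [x [m n]]; have Hv := repP_valid E.
have [Hb Hx Hmn Hn [H1 H2 H3]] := validP_facts Hv.
have Hv' : validV (x, n) by split.
have [c [-> Ec]] := mkV_spec (inl (vert x n)) Hv'; rewrite /= Ec /Dv.
rewrite (gm_sc Hx) // (gm_deg Hx) //; congr (inr (_, _)).
apply: nkP => i; nkE; move: (lek_i i Hmn); case: (pdeg x i) => *; clia.
Qed.

Lemma degE_D (P : Pt G) : degE (inr P) = (Dp (repP P)).2.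
Proof. by rewrite /degE; case: (repP P) => x [m n]. Qed.

Lemma idmE_D (c : Vt G) : let: (u, o) := Dv (repV c) in
  MorD (idmE (inr c)) = inr (idm u, o, zerok k).
Proof.
rewrite /idmE; case E: (repV c) => [x m]; have [Hb Hm] := repV_valid E.
have Hv : validP (x, (m, m)) by split=> //; split=> //; exact: lek_refl.
have [P [-> EP]] := mkP_spec (inl (pm x m m)) Hv; rewrite /= EP /Dp.
have Hx : graph_morphism x by case: Hb.
rewrite (gm_id Hx) ?meetI_le //; congr (inr (_, _, _)); nk.
Qed.

Lemma comp_lr (a : Mor) (P : Pt G) : inl (sc a) = rgE (inr P) ->
  let: (s, o, l) := Dp (repP P) in
  MorD (compE (inl a) (inr P)) = inr (cmp a s, o, addk (deg a) l).
Proof.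
rewrite /rgE /compE; case E: (repP P) => [x [m n]]; have Hv := repP_valid E.
have [Hb Hx Hmn Hn [H1 H2 H3]] := validP_facts Hv.
case: ifP => Hm; last first.
  have Hv' : validV (x, m) by split=> //=; rewrite Hm.
  by have [c [-> _]] := mkV_spec (inl (vert x m)) Hv'.
case=> Hsc.
set x' := shift x m.
have Hb' : boundary_path x' by apply: shift_bd.
have Hx' : graph_morphism x' by case: Hb'.
have Hsc' : sc a = vert x' (zerok k).
  by rewrite vert_shift Hsc; congr vert; nk.
have Hc := concat_spec HG Hx' Hsc'.
set z := concat a x' in Hc *.
have [Ed [Hz _]] := Hc.
have [i [c [Ei Hci]]] := notleI Hn.
have Hv2 : validP (z, (zerok k, addk (deg a) (subk n m))).
  split; first exact: concat_bd Hc Hb'.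
  split; first exact: lek0.
  apply/negP => /leIP /(_ i (deg a i + (c - m i))).
  rewrite Ed addNIE /= /x' /= subINE Ei /= => /(_ erefl).
  move: (leI_i i Hm) (lek_i i Hmn); rewrite Ei; nkE; clia.
have [P' [-> EP]] := mkP_spec (inl a) Hv2; rewrite /= EP /Dp.
set t := subk (meetI n (pdeg x)) m.
have Ht : leI t (pdeg x').
  apply/leIP => j b; rewrite /= subINE /t; nkE.
  case: (pdeg x j) => //= b' [<-]; clia.
have E0 : meetI (zerok k) (pdeg z) = zerok k.
  by apply: nkP => j; nkE; case: (pdeg z j) => *; clia.
have E1 : meetI (addk (deg a) (subk n m)) (pdeg z) = addk (deg a) t.
  apply: nkP => j; rewrite Ed /t; nkE.
  move: (leI_i j Hm) (lek_i j Hmn); case: (pdeg x j) => /= *; clia.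
rewrite E0 E1 (concat_pm HG Hc (lek0 _) Ht) (suf0 HG) /x' /=.
have -> : addk (zerok k) m = meetI m (pdeg x) by rewrite meetI_id //; nk.
have -> : addk t m = meetI n (pdeg x).
  apply: nkP => j; rewrite /t; nkE.
  move: (leI_i j Hm) (lek_i j Hmn); case: (pdeg x j) => /= *; clia.
rewrite meetI_id //; congr (inr (_, _, _)); nk.
Qed.

Lemma comp_rr (P Q : Pt G) : scE (inr P) = rgE (inr Q) ->
  MorD (compE (inr P) (inr Q)) =
  let: (s1, o1, l1) := Dp (repP P) in let: (s2, o2, l2) := Dp (repP Q) in
  inr (cmp s1 s2, o1, addk l1 l2).
Proof.
rewrite /scE /rgE /compE; case E1: (repP P) => [x [m n]]; case E2: (repP Q) => [y [p q]].
have Hv1 := repP_valid E1; have Hv2 := repP_valid E2.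
have [Hbx Hx Hmn Hn [H1 H2 H3]] := validP_facts Hv1.
have [Hby Hy Hpq Hq [H1' H2' H3']] := validP_facts Hv2.
have Hv' : validV (x, n) by split.
have [c1 [-> Ec1]] := mkV_spec (inl (vert x n)) Hv'.
case: ifP => Hp; first by [].
have Hv'' : validV (y, p) by split=> //=; rewrite Hp.
have [c2 [-> Ec2]] := mkV_spec (inl (vert y p)) Hv''.
case=> Ec; rewrite Ec Ec2 /Dv in Ec1; case: Ec1 => Hvert Hoff.
set dx := pdeg x in Hvert Hoff H1 H2 H3 Hn *.
set dy := pdeg y in Hvert Hoff H1' H2' H3' Hp *.
set lam := pm x (zerok k) (meetI n dx).
set y' := shift y (meetI p dy).
have Hb' : boundary_path y' by apply: shift_bd Hby _; exact: meetI_le.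
have Hy' : graph_morphism y' by case: Hb'.
have Edl : deg lam = meetI n dx by rewrite (gm_deg Hx (lek0 _) H2); nk.
have Hsc : sc lam = vert y' (zerok k).
  rewrite (gm_sc Hx (lek0 _) H2) vert_shift -Hvert; congr vert; nk.
have Hc := concat_spec HG Hy' Hsc.
set z := concat lam y' in Hc *.
have [Ed [Hz _]] := Hc.
have Hoffi : forall j, n j - meetI n dx j = p j - meetI p dy j.
  by move=> j; move: (congr1 (fun f : Nk k => f j) Hoff); nkE.
have Ezd : forall j, pdeg z j = omap (addn (meetI n dx j)) (omap (subn^~ (meetI p dy j)) (dy j)).
  by move=> j; rewrite Ed addNIE /= subINE Edl.
have [i [c [Ei Hci]]] := notleI Hn.
have Hv3 : validP (z, (m, subk (addk n q) p)).
  split; first exact: concat_bd Hc Hb'.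
  split; first by apply/lekP => j /=; nkE; move: (lek_i j Hmn) (lek_i j Hpq); clia.
  apply/negP => Hle; move: (leI_i i Hle) (Hoffi i) (lek_i i Hpq).
  rewrite Ezd; nkE; rewrite Ei; case: (dy i) => [e|] /=; clia.
have [P' [-> EP]] := mkP_spec (inr P) Hv3; rewrite /= EP /Dp.
set t := subk (meetI q dy) (meetI p dy).
have Ht : leI t (pdeg y').
  apply/leIP => j b; rewrite /= subINE /t; nkE.
  case: (dy j) => //= b' [<-]; clia.
have E3 : meetI m (pdeg z) = meetI m dx.
  apply: nkP => j; move: (Hoffi j) (lek_i j Hmn); rewrite !meetIE Ezd; nkE.
  case: (dx j) => [a|]; case: (dy j) => [b|] /=; clia.
have E4 : meetI (subk (addk n q) p) (pdeg z) = addk (deg lam) t.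
  apply: nkP => j; move: (Hoffi j) (lek_i j Hmn) (lek_i j Hpq); rewrite Edl /t !meetIE Ezd; nkE.
  case: (dx j) => [a|]; case: (dy j) => [b|] /=; clia.
have Hma : lek (meetI m dx) (deg lam) by rewrite Edl; apply: meetI_mono.
rewrite E3 E4 (concat_pm HG Hc Hma Ht) /y' /=.
rewrite -(gm_suf HG Hx) ?Edl //.
have -> : addk (zerok k) (meetI p dy) = meetI p dy by nk.
have -> : addk t (meetI p dy) = meetI q dy.
  apply: nkP => j; rewrite /t; nkE; move: (lek_i j Hpq); case: (dy j) => /= *; clia.
congr (inr (_, _, _)); apply: nkP => j; nkE; move: (lek_i j Hmn) (lek_i j Hpq); clia.
Qed.

End Ops.

Section Main1.
Variables (k : nat) (G : kgraph_data k) (HG : is_kgraph G).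
Local Notation Mor := (Mor G).
Local Notation cmp := (@Defs.comp k G).
Local Notation rg := (@rg k G).
Local Notation sc := (@sc k G).
Local Notation deg := (@deg k G).
Local Notation idm := (@idm k G).
Local Notation pm := (@Defs.pmap k G).
Local Notation pre := (@pre k G).
Local Notation suf := (@suf k G).
Local Notation Dp := (@Dp k G).
Local Notation Dv := (@Dv k G).
Local Notation MorD := (@MorD k G).
Local Notation ObjD := (@ObjD k G).

Definition seg (P : Pt G) := (Dp (repP P)).1.1.
Definition off (P : Pt G) := (Dp (repP P)).1.2.
Definition len (P : Pt G) := (Dp (repP P)).2.
Lemma DpE (P : Pt G) : Dp (repP P) = (seg P, off P, len P).
Proof. by rewrite /seg /off /len; case: (Dp (repP P)) => [[]]. Qed.

Lemma MorD_inr f s o l : MorD f = inr (s, o, l) -> exists P, f = inr P /\ seg P = s /\ off P = o /\ len P = l.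
Proof. by case: f => //= P [E]; exists P; rewrite /seg /off /len E. Qed.
Lemma ObjD_inl (o : ObjE G) v : ObjD o = inl v -> o = inl v.
Proof. by case: o => //= ? [->]. Qed.
Lemma ObjD_inr (o : ObjE G) t : ObjD o = inr t -> exists c, o = inr c /\ Dv (repV c) = t.
Proof. by case: o => //= c [E]; exists c. Qed.

Lemma rgE_P (P : Pt G) : ObjD (rgE (inr P)) =
  if off P == zerok k then inl (rg (seg P)) else inr (rg (seg P), off P).
Proof. by have := rgE_D P; rewrite DpE. Qed.
Lemma scE_P (P : Pt G) : ObjD (scE (inr P)) = inr (sc (seg P), subk (addk (off P) (len P)) (deg (seg P))).
Proof. by have := scE_D P; rewrite DpE. Qed.
Lemma degE_P (P : Pt G) : degE (inr P) = len P.
Proof. by rewrite degE_D DpE. Qed.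
Lemma idmE_P (c : Vt G) : MorD (idmE (inr c)) = inr (idm (Dv (repV c)).1, (Dv (repV c)).2, zerok k).
Proof. by have := idmE_D c; case: (Dv (repV c)). Qed.
Lemma P_eq' (P Q : Pt G) : seg P = seg Q -> off P = off Q -> len P = len Q -> P = Q.
Proof. by move=> *; apply: P_eq; rewrite !DpE; congr (_, _, _). Qed.

Lemma invP (P : Pt G) : [/\ lek (deg (seg P)) (len P), (forall i, 0 < off P i -> deg (seg P) i = 0) &
      subk (addk (off P) (len P)) (deg (seg P)) != zerok k].
Proof.
have [Hv _] := repP_spec P; have := Dp_inv Hv; rewrite DpE; by case.
Qed.
Lemma invV (c : Vt G) : (Dv (repV c)).2 != zerok k.
Proof. by have [Hv _] := repV_spec c; apply: Dv_inv. Qed.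

Lemma scE_inr (P : Pt G) : exists c, scE (inr P) = inr c.
Proof. by have [c [E _]] := ObjD_inr (scE_P P); exists c. Qed.

Lemma CL1 (a : Mor) (P : Pt G) : inl (sc a) = rgE (inr P) <-> (off P = zerok k /\ sc a = rg (seg P)).
Proof.
split=> [H|[H1 H2]].
  have := rgE_P P; rewrite -H /=; case: eqP => // E [->]; by [].
by apply: ObjD_inj; rewrite rgE_P H1 eqxx H2.
Qed.

Lemma CL2 (P Q : Pt G) : scE (inr P) = rgE (inr Q) <->
  [/\ off Q != zerok k, rg (seg Q) = sc (seg P) & off Q = subk (addk (off P) (len P)) (deg (seg P))].
Proof.
split=> [H|[H1 H2 H3]].
  have := rgE_P Q; rewrite -H scE_P; case: ifP => // /negbT E [-> ->]; by [].
by apply: ObjD_inj; rewrite rgE_P scE_P (negbTE H1) H2 H3.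
Qed.

Lemma comp_lr' (a : Mor) (P : Pt G) : inl (sc a) = rgE (inr P) ->
  exists P', compE (inl a) (inr P) = inr P' /\ seg P' = cmp a (seg P) /\ off P' = zerok k /\
     len P' = addk (deg a) (len P).
Proof.
move=> H; have := comp_lr HG H; rewrite DpE => /MorD_inr [P' [E [E1 [E2 E3]]]].
by exists P'; rewrite E E1 E2 E3; move/CL1: H => [-> _].
Qed.

Lemma comp_rr' (P Q : Pt G) : scE (inr P) = rgE (inr Q) ->
  exists P', compE (inr P) (inr Q) = inr P' /\ seg P' = cmp (seg P) (seg Q) /\ off P' = off P /\
     len P' = addk (len P) (len Q).
Proof.
move=> H; have := comp_rr HG H; rewrite !DpE => /MorD_inr [P' [E [E1 [E2 E3]]]].
by exists P'.
Qed.

Lemma L_rg_comp (f g : MorE G) : scE f = rgE g -> rgE (compE f g) = rgE f.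
Proof.
case: f => [a|P]; case: g => [b|Q] H.
- by rewrite /= (kg_rg_comp HG) //; case: H.
- have [P' [-> [E1 [E2 E3]]]] := comp_lr' H; move/CL1: H => [H1 H2].
  apply: ObjD_inj; rewrite rgE_P E2 eqxx E1 (kg_rg_comp HG) //.
- by have [c E] := scE_inr P; rewrite E in H.
- have [P' [-> [E1 [E2 E3]]]] := comp_rr' H; move/CL2: H => [H1 H2 H3].
  by apply: ObjD_inj; rewrite !rgE_P E2 E1 (kg_rg_comp HG).
Qed.

Lemma L_sc_comp (f g : MorE G) : scE f = rgE g -> scE (compE f g) = scE g.
Proof.
case: f => [a|P]; case: g => [b|Q] H.
- by rewrite /= (kg_sc_comp HG) //; case: H.
- have [P' [-> [E1 [E2 E3]]]] := comp_lr' H; move/CL1: H => [H1 H2].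
  have [Hi _ _] := invP Q.
  apply: ObjD_inj; rewrite !scE_P E1 E2 E3 H1 (kg_sc_comp HG) // (kg_deg_comp HG) //.
  congr (inr (_, _)); apply: nkP => i; nkE; move: (lek_i i Hi); clia.
- by have [c E] := scE_inr P; rewrite E in H.
- have [P' [-> [E1 [E2 E3]]]] := comp_rr' H; move/CL2: H => [H1 H2 H3].
  have [Hi _ _] := invP P; have [Hj _ _] := invP Q.
  apply: ObjD_inj; rewrite !scE_P E1 E2 E3 H3 (kg_sc_comp HG) // (kg_deg_comp HG) //.
  congr (inr (_, _)); apply: nkP => i; nkE; move: (lek_i i Hi) (lek_i i Hj); clia.
Qed.

Lemma L_deg_comp (f g : MorE G) : scE f = rgE g -> degE (compE f g) = addk (degE f) (degE g).
Proof.
case: f => [a|P]; case: g => [b|Q] H.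
- by rewrite /= (kg_deg_comp HG) //; case: H.
- by have [P' [-> [E1 [E2 E3]]]] := comp_lr' H; rewrite !degE_P E3.
- by have [c E] := scE_inr P; rewrite E in H.
- by have [P' [-> [E1 [E2 E3]]]] := comp_rr' H; rewrite !degE_P E3.
Qed.

End Main1.

Section Main2.
Variables (k : nat) (G : kgraph_data k) (HG : is_kgraph G).
Local Notation Mor := (Mor G).
Local Notation cmp := (@Defs.comp k G).
Local Notation rg := (@rg k G).
Local Notation sc := (@sc k G).
Local Notation deg := (@deg k G).
Local Notation idm := (@idm k G).
Local Notation Dv := (@Dv k G).
Local Notation MorD := (@MorD k G).
Local Notation ObjD := (@ObjD k G).

Lemma L_rg_idm (o : ObjE G) : rgE (idmE o) = o.
Proof.
case: o => [v|c]; first by rewrite /= (kg_rg_idm HG).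
have /MorD_inr [P1 [-> [E1 [E2 E3]]]] := idmE_P c.
apply: ObjD_inj; rewrite rgE_P E2 (negbTE (invV c)) E1 (kg_rg_idm HG) /=.
by case: (Dv (repV c)).
Qed.

Lemma L_sc_idm (o : ObjE G) : scE (idmE o) = o.
Proof.
case: o => [v|c]; first by rewrite /= (kg_sc_idm HG).
have /MorD_inr [P1 [-> [E1 [E2 E3]]]] := idmE_P c.
apply: ObjD_inj; rewrite scE_P E2 E3 E1 (kg_sc_idm HG) (kg_deg_idm HG) /=.
have -> : subk (addk (Dv (repV c)).2 (zerok k)) (zerok k) = (Dv (repV c)).2 by nk.
by case: (Dv (repV c)).
Qed.

Lemma L_deg_idm (o : ObjE G) : degE (idmE o) = zerok k.
Proof.
case: o => [v|c]; first by rewrite /= (kg_deg_idm HG).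
by have /MorD_inr [P1 [-> [E1 [E2 E3]]]] := idmE_P c; rewrite degE_P.
Qed.

Lemma L_idl (f : MorE G) : compE (idmE (rgE f)) f = f.
Proof.
case: f => [a|P]; first by rewrite /= (kg_idl HG).
case E: (off P == zerok k).
  have Hr : rgE (inr P) = inl (rg (seg P)) by apply: ObjD_inl; rewrite rgE_P E.
  have Hc : inl (sc (idm (rg (seg P)))) = rgE (inr P) by rewrite Hr (kg_sc_idm HG).
  have Hi : idmE (inl (rg (seg P))) = inl (idm (rg (seg P))) :> MorE G by [].
  rewrite Hr Hi; have [P' [-> [E1 [E2 E3]]]] := comp_lr' HG Hc.
  congr inr; apply: P_eq'; rewrite ?E1 ?E2 ?E3 ?(kg_idl HG) ?(eqP E) //.
  rewrite (kg_deg_idm HG); nk.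
have [c [Hr Ec]] := ObjD_inr (etrans (rgE_P P) (congr1 (fun b => if b then _ else _) E)).
rewrite Hr; have /MorD_inr [P1 [-> [F1 [F2 F3]]]] := idmE_P c.
rewrite Ec /= in F1 F2.
have Hc : scE (inr P1) = rgE (inr P).
  apply/CL2; split; [by rewrite E | by rewrite F1 (kg_sc_idm HG) |].
  by rewrite F1 F2 F3 (kg_deg_idm HG); nk.
have [P' [-> [E1 [E2 E3]]]] := comp_rr' HG Hc.
congr inr; apply: P_eq'; rewrite ?E1 ?E2 ?E3 ?F1 ?F2 ?F3 ?(kg_idl HG) //; nk.
Qed.

Lemma L_idr (f : MorE G) : compE f (idmE (scE f)) = f.
Proof.
case: f => [a|P]; first by rewrite /= (kg_idr HG).
have [c [Hr Ec]] := ObjD_inr (scE_P P).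
rewrite Hr; have /MorD_inr [P1 [-> [F1 [F2 F3]]]] := idmE_P c.
rewrite Ec /= in F1 F2.
have [_ _ Hne] := invP P.
have Hc : scE (inr P) = rgE (inr P1).
  apply/CL2; split; [by rewrite F2 | by rewrite F1 (kg_rg_idm HG) |].
  by rewrite F2.
have [P' [-> [E1 [E2 E3]]]] := comp_rr' HG Hc.
congr inr; apply: P_eq'; rewrite ?E1 ?E2 ?E3 ?F1 ?F2 ?F3 ?(kg_idr HG) //; nk.
Qed.

Lemma scE_inl_not (P : Pt G) v : scE (inr P) <> inl v.
Proof. by have [c ->] := scE_inr P. Qed.

Lemma L_assoc (f g h : MorE G) : scE f = rgE g -> scE g = rgE h ->
  compE (compE f g) h = compE f (compE g h).
Proof.
case: f => [a|P]; case: g => [b|Q]; case: h => [c|R] H1 H2;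
  try by [case: (scE_inl_not H1) | case: (scE_inl_not H2)].
- by rewrite /= (kg_assoc HG) //; [case: H1 | case: H2].
- case: H1 => H1.
  have Hc : inl (sc (cmp a b)) = rgE (inr R) by rewrite (kg_sc_comp HG H1).
  have Hab : compE (inl a) (inl b) = inl (cmp a b) :> MorE G by [].
  rewrite Hab.
  have [P1 [-> [E1 [E2 E3]]]] := comp_lr' HG Hc.
  have [P2 [-> [F1 [F2 F3]]]] := comp_lr' HG H2.
  move/CL1: H2 => [G1 G2].
  have Hc' : inl (sc a) = rgE (inr P2) by apply/CL1; rewrite F1 F2 (kg_rg_comp HG G2).
  have [P3 [-> [K1 [K2 K3]]]] := comp_lr' HG Hc'.
  congr inr; apply: P_eq'; rewrite ?E1 ?E2 ?E3 ?K1 ?K2 ?K3 ?F1 ?F2 ?F3 ?(kg_assoc HG) //.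
  rewrite (kg_deg_comp HG H1); nk.
- have [P1 [E [E1 [E2 E3]]]] := comp_lr' HG H1.
  have H3 : scE (inr P1) = rgE (inr R) by rewrite -E (L_sc_comp HG H1).
  have [P3 [E' [F1 [F2 F3]]]] := comp_rr' HG H2.
  have H4 : inl (sc a) = rgE (inr P3) by rewrite -E' (L_rg_comp HG H2).
  rewrite E E'.
  have [P2 [-> [K1 [K2 K3]]]] := comp_rr' HG H3.
  have [P4 [-> [L1 [L2 L3]]]] := comp_lr' HG H4.
  move/CL1: H1 => [G1 G2]; move/CL2: H2 => [G3 G4 G5].
  congr inr; apply: P_eq'; rewrite ?E1 ?E2 ?E3 ?K1 ?K2 ?K3 ?L1 ?L2 ?L3 ?E1 ?E2 ?E3 ?F1 ?F2 ?F3 ?(kg_assoc HG) //.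
  nk.
- have [P1 [E [E1 [E2 E3]]]] := comp_rr' HG H1.
  have H3 : scE (inr P1) = rgE (inr R) by rewrite -E (L_sc_comp HG H1).
  have [P3 [E' [F1 [F2 F3]]]] := comp_rr' HG H2.
  have H4 : scE (inr P) = rgE (inr P3) by rewrite -E' (L_rg_comp HG H2).
  rewrite E E'.
  have [P2 [-> [K1 [K2 K3]]]] := comp_rr' HG H3.
  have [P4 [-> [L1 [L2 L3]]]] := comp_rr' HG H4.
  move/CL2: H1 => [G1 G2 G3]; move/CL2: H2 => [G4 G5 G6].
  congr inr; apply: P_eq'; rewrite ?E1 ?E2 ?E3 ?K1 ?K2 ?K3 ?L1 ?L2 ?L3 ?E1 ?E2 ?E3 ?F1 ?F2 ?F3 ?(kg_assoc HG) //.
  nk.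
Qed.

End Main2.

Section Main3.
Variables (k : nat) (G : kgraph_data k) (HG : is_kgraph G).
Local Notation Mor := (Mor G).
Local Notation cmp := (@Defs.comp k G).
Local Notation rg := (@rg k G).
Local Notation sc := (@sc k G).
Local Notation deg := (@deg k G).
Local Notation idm := (@idm k G).
Local Notation pm := (@Defs.pmap k G).
Local Notation pre := (@pre k G).
Local Notation suf := (@suf k G).
Local Notation Dp := (@Dp k G).
Local Notation Dv := (@Dv k G).
Local Notation MorD := (@MorD k G).
Local Notation ObjD := (@ObjD k G).

Definition minK (a b : Nk k) : Nk k := [ffun i => minn (a i) (b i)].
Lemma minKE a b i : minK a b i = minn (a i) (b i). Proof. by rewrite ffunE. Qed.

Lemma nz_ex (a : Nk k) : a != zerok k -> exists i, 0 < a i.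
Proof.
move=> H; apply: NNPP => H'; move/negP: H; apply; apply/eqP; apply: nkP => i.
rewrite zerokE; case: (posnP (a i)) => // Hp; exfalso; apply: H'; by exists i.
Qed.

Lemma repP_data (P : Pt G) x M N : repP P = (x, (M, N)) ->
  [/\ seg P = pm x (meetI M (pdeg x)) (meetI N (pdeg x)), off P = subk M (meetI M (pdeg x)) &
      len P = subk N M].
Proof. by move=> E; have := DpE P; rewrite E /Dp => -[-> -> ->]. Qed.

Lemma split_P (P : Pt G) a b : len P = addk a b ->
  (exists P2, [/\ seg P2 = suf (seg P) (minK a (deg (seg P))),
                 off P2 = subk (addk (off P) a) (minK a (deg (seg P))) & len P2 = b]) /\
  (~~ ((off P == zerok k) && lek a (deg (seg P))) ->
   exists P1, [/\ seg P1 = pre (seg P) (minK a (deg (seg P))), off P1 = off P & len P1 = a]).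
Proof.
case E: (repP P) => [x [M N]]; have Hv := repP_valid E.
have [Hb Hx HMN HN [H1 H2 H3]] := validP_facts Hv.
have [Es Eo El] := repP_data E; rewrite Es Eo El => Hl.
set d := pdeg x in Es Eo El Hl H1 H2 H3 HN *.
have HMa : lek M (addk M a) by apply/lekP => i; nkE; clia.
have HaN : lek (addk M a) N.
  apply/lekP => i; move: (congr1 (fun f : Nk k => f i) Hl) (lek_i i HMN); nkE; clia.
have K1 : lek (meetI M d) (meetI (addk M a) d) by apply: meetI_mono.
have K2 : lek (meetI (addk M a) d) (meetI N d) by apply: meetI_mono.
have Hsc := gm_sc_rg Hx K1 K2 H2.
have Hcmp := gm_comp Hx K1 K2 H2.
have Hdeg : deg (pm x (meetI M d) (meetI (addk M a) d)) = minK a (deg (pm x (meetI M d) (meetI N d))).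
  rewrite !(gm_deg Hx) //; last exact: leI_trans K2 H2.
  apply: nkP => i; rewrite minKE; nkE.
  move: (congr1 (fun f : Nk k => f i) Hl) (lek_i i HMN); nkE; case: (d i) => /= *; clia.
have [U1 U2] := fp_uniq HG Hsc Hcmp; rewrite Hdeg in U1 U2.
split.
  have Hv2 : validP (x, (addk M a, N)) by split.
  have [P2 [_ EP]] := mkP_spec (inl (idm (vert x N))) Hv2.
  exists P2; rewrite /seg /off /len EP /= -U2 -Hdeg; split=> //.
    rewrite (gm_deg Hx) //; last exact: leI_trans K2 H2.
    apply: nkP => i; nkE; case: (d i) => /= *; clia.
  apply: nkP => i; move: (congr1 (fun f : Nk k => f i) Hl) (lek_i i HMN); nkE; clia.
move=> Hc.
have Hv1 : validP (x, (M, addk M a)).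
  split=> //; split=> //; apply/negP => Hle; move/negP: Hc; apply.
  apply/andP; split.
    by rewrite off0; apply: leI_trans Hle.
  rewrite (gm_deg Hx) //; apply/lekP => i; nkE.
  move: (leI_i i Hle) (congr1 (fun f : Nk k => f i) Hl) (lek_i i HMN); nkE; case: (d i) => /= *; clia.
have [P1 [_ EP]] := mkP_spec (inl (idm (vert x N))) Hv1.
exists P1; rewrite /seg /off /len EP /= -U1; split=> //.
apply: nkP => i; nkE; clia.
Qed.

Lemma L_fact (l : MorE G) (m n : Nk k) : degE l = addk m n ->
  exists! p : MorE G * MorE G, scE p.1 = rgE p.2 /\ compE p.1 p.2 = l /\ degE p.1 = m /\ degE p.2 = n.
Proof.
case: l => [lam|P] H.
  have [[u w] [[U1 [U2 [U3 U4]]] Hu]] := kg_fact HG H.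
  exists (inl u, inl w); split; first by rewrite /= U1 U2.
  move=> [[u'|Q1] [w'|Q2]] [S1 [S2 [S3 S4]]]; cbn [fst snd] in S1, S2, S3, S4.
  - have := Hu (u', w'); case: S1 => S1; case: S2 => S2.
    by move=> /(_ (conj S1 (conj S2 (conj S3 S4)))) [-> ->].
  - by have [P' [E _]] := comp_lr' HG S1; rewrite E in S2.
  - by case: (scE_inl_not S1).
  - by have [P' [E _]] := comp_rr' HG S1; rewrite E in S2.
rewrite degE_P in H.
have [[P2 [A1 A2 A3]] HB] := split_P H.
set s := seg P in A1 A2 HB *; set c := minK m (deg s) in A1 A2 HB *.
have Hds := invP P; case: Hds => Hsl Hso Hsn.
have Hcs : lek c (deg s) by apply/lekP => i; rewrite minKE; clia.
case: (boolP ((off P == zerok k) && lek m (deg s))) => Hcase.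
- case/andP: Hcase => /eqP Ho Hm.
  have Ecm : c = m by apply: nkP => i; rewrite minKE; move: (lek_i i Hm); clia.
  rewrite Ecm Ho in A1 A2.
  have A2' : off P2 = zerok k by rewrite A2; nk.
  have S1 : inl (sc (pre s m)) = rgE (inr P2) by apply/CL1; rewrite A1 fp_sc.
  exists (inl (pre s m), inr P2); split.
    split=> //; split; last by split; [exact: fp_deg1 | exact: (etrans (degE_P P2) A3)].
    have [P' [-> [E1 [E2 E3]]]] := comp_lr' HG S1.
    congr inr; apply: P_eq'; rewrite ?E1 ?E2 ?E3 ?A1 ?fp_comp ?fp_deg1 // ?H ?Ho ?A3 //.
  move=> [[u|Q1] [w|Q2]] [S1' [S2 [S3 S4]]]; cbn [fst snd] in S1', S2, S3, S4.
  + by case: S2.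
  + have [P' [E [E1 [E2 E3]]]] := comp_lr' HG S1'; rewrite E in S2; case: S2 => S2; subst P'.
    move/CL1: S1' => [G1 G2].
    have S3' : deg u = m := S3.
    have [V1 V2] := fp_uniq HG G2 (esym E1); rewrite S3' -/s in V1 V2.
    rewrite degE_P in S4.
    by congr (_, _); [rewrite V1 | congr inr; apply: P_eq'; rewrite ?V2 ?A1 ?A2' ?G1 ?A3 ?S4].
  + by case: (scE_inl_not S1').
  + have [P' [E [E1 [E2 E3]]]] := comp_rr' HG S1'; rewrite E in S2; case: S2 => S2; subst P'.
    move/CL2: S1' => [G1 G2 G3]; rewrite !degE_P in S3 S4.
    have [Hq1 _ _] := invP Q1.
    have [_ Hq2 _] := invP Q2.
    have [i Hi] := nz_ex G1.
    move: Hi (Hq2 i Hi) (lek_i i Hq1) (lek_i i Hm) (congr1 (fun f : Nk k => f i) G3)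
      (congr1 (fun f : Nk k => f i) Ho).
    rewrite /s E1 (kg_deg_comp HG (esym G2)) -E2 S3; nkE; clia.
- have [P1 [B1 B2 B3]] := HB Hcase.
  have Hne : off P2 != zerok k.
    rewrite A2; apply/negP => /eqP Z; move/negP: Hcase; apply; apply/andP; split.
      apply/eqP; apply: nkP => i; move: (congr1 (fun f : Nk k => f i) Z); nkE; rewrite minKE; clia.
    apply/lekP => i; move: (congr1 (fun f : Nk k => f i) Z); nkE; rewrite minKE; clia.
  have S1 : scE (inr P1) = rgE (inr P2).
    apply/CL2; split=> //; first by rewrite A1 B1 fp_sc.
    rewrite A2 B1 B2 B3 fp_deg1 //.
  exists (inr P1, inr P2); split.
    split=> //; split; last by split; [exact: (etrans (degE_P P1) B3) | exact: (etrans (degE_P P2) A3)].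
    have [P' [-> [E1 [E2 E3]]]] := comp_rr' HG S1.
    congr inr; apply: P_eq'; rewrite ?E1 ?E2 ?E3 ?A1 ?B1 ?fp_comp // ?H ?B2 ?B3 ?A3 //.
  move=> [[u|Q1] [w|Q2]] [S1' [S2 [S3 S4]]]; cbn [fst snd] in S1', S2, S3, S4.
  + by case: S2.
  + have [P' [E [E1 [E2 E3]]]] := comp_lr' HG S1'; rewrite E in S2; case: S2 => S2; subst P'.
    move/CL1: S1' => [G1 G2]; exfalso; move/negP: Hcase; apply; apply/andP; split.
      by rewrite -E2.
    have S3' : deg u = m := S3.
    by rewrite /s E1 (kg_deg_comp HG G2) S3'; apply/lekP => i; nkE; clia.
  + by case: (scE_inl_not S1').
  + have [P' [E [E1 [E2 E3]]]] := comp_rr' HG S1'; rewrite E in S2; case: S2 => S2; subst P'.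
    move/CL2: S1' => [G1 G2 G3]; rewrite !degE_P in S3 S4.
    have [Hq1 _ _] := invP Q1; have [_ Hq2 _] := invP Q2.
    have Hd1 : deg (seg Q1) = c.
      apply: nkP => i; rewrite /c /s E1 minKE (kg_deg_comp HG (esym G2)) addkE -S3.
      move: (lek_i i Hq1) (Hq2 i) (congr1 (fun f : Nk k => f i) G3); nkE.
      case: (off Q2 i) => [|?] /=; clia.
    have [V1 V2] := fp_uniq HG (esym G2) (esym E1); rewrite Hd1 -/s in V1 V2.
    congr (_, _); congr inr; apply: P_eq'; rewrite ?V1 ?V2 ?A1 ?B1 //.
    * by rewrite B2 E2.
    * by rewrite B3 S3.
    * by rewrite A2 G3 -E2 Hd1 S3.
    * by rewrite A3 S4.
Qed.

End Main3.

Section Main4.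
Variables (k : nat) (G : kgraph_data k) (HG : is_kgraph G).
Local Notation Mor := (Mor G).
Local Notation cmp := (@Defs.comp k G).
Local Notation rg := (@rg k G).
Local Notation sc := (@sc k G).
Local Notation deg := (@deg k G).
Local Notation idm := (@idm k G).
Local Notation pm := (@Defs.pmap k G).
Local Notation Dp := (@Dp k G).
Local Notation Dv := (@Dv k G).
Local Notation MorD := (@MorD k G).
Local Notation ObjD := (@ObjD k G).

Lemma L_count : exists f : MorE G -> nat, injective f.
Proof.
have [g Hg] := kg_countable HG.
pose h (t : Mor + (Mor * Nk k * Nk k)) : (nat + (nat * Nk k * Nk k))%type :=
  match t with inl l => inl (g l) | inr (s, o, l) => inr (g s, o, l) end.
have Hh : injective h.
  by case=> [a|[[s o] l]] [b|[[s' o'] l']] //= [] => [/Hg -> | /Hg -> -> ->].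
exists (fun f => pickle (h (MorD f))).
move=> f f' /(pcan_inj pickleK) /Hh; exact: MorD_inj.
Qed.

Lemma L_nosrc (o : ObjE G) (n : Nk k) : exists f, rgE f = o /\ degE f = n.
Proof.
case: o => [v|c].
  set x := @xB k G v.
  have Hb : boundary_path x := @xB_bd k G HG v.
  have Hx : graph_morphism x by case: Hb.
  have H0 : vert x (zerok k) = v := @xB_vert0 k G HG v.
  case: (boolP (leI n (pdeg x))) => Hn.
    exists (inl (pm x (zerok k) n)); split.
      by rewrite /= (gm_rg Hx) ?H0 //; apply: lek0.
    by rewrite /= (gm_deg Hx) //; [nk | apply: lek0].
  have Hv : validP (x, (zerok k, n)) by split=> //; split=> //; apply: lek0.
  have [P [EP DP]] := mkP_spec (inl (idm v)) Hv.
  exists (inr P); split; last by rewrite /degE; move: DP; case: (repP P) => y [m' n'] /= [_ _ ->]; nk.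
  have E0 : meetI (zerok k) (pdeg x) = zerok k.
    by apply: nkP => i; nkE; case: (pdeg x i) => *; clia.
  apply: ObjD_inl; rewrite rgE_P /seg /off DP /= E0.
  have -> : subk (zerok k) (zerok k) = zerok k by nk.
  rewrite eqxx (gm_rg Hx) ?H0 //; [apply: lek0 | apply: meetI_le].
case E: (repV c) => [x m]; have [Hb Hm] := repV_valid E.
have Hx : graph_morphism x by case: Hb.
have Hv : validP (x, (m, addk m n)).
  split=> //; split; first by apply/lekP => i /=; nkE; clia.
  apply/negP => H; move/negP: Hm; apply; apply: leI_trans H; apply/lekP => i /=; nkE; clia.
have [P [EP DP]] := mkP_spec (inl (idm (vert x m))) Hv.
exists (inr P); split; last by rewrite /degE; move: DP; case: (repP P) => y [m' n'] /= [_ _ ->]; nk.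
apply: ObjD_inj; rewrite rgE_P /seg /off DP /= off0 (negbTE Hm) E /Dv.
rewrite (gm_rg Hx) //; [apply: meetI_mono; apply/lekP => i; nkE; clia | apply: meetI_le].
Qed.

End Main4.

Theorem theorem3p24 (k : nat) (G : kgraph_data k) (HG : is_kgraph G) :
  is_kgraph (kext G) /\ no_sources (kext G).
Proof.
split; last by move=> o n; exact: L_nosrc.
split.
- exact: L_count.
- exact: L_rg_idm.
- exact: L_sc_idm.
- exact: L_rg_comp.
- exact: L_sc_comp.
- exact: L_idl.
- exact: L_idr.
- exact: L_assoc.
- exact: L_deg_idm.
- exact: L_deg_comp.
- exact: L_fact.
Qed.
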